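(* Let $(D,\Sigma)$ be a strongly recursive tropical linear series of rank $r$ on a metric graph $\Gamma$, with $\Sigma\subseteq R(D)$. Let $v\in\Gamma$ be a point of valence $2$ with $v\notin\mathrm{supp}(D)$ and tangent vectors $\eta_1,\eta_2$, and assume $s_{\eta_1}[i]+s_{\eta_2}[r-i]=0$ for all $0\le i\le r$. Then the local array of $\Sigma$ at $v$ (with respect to the ordering $\eta_1,\eta_2$) is the redundant closure of the standard permutation array of rank $r$ and dimension $2$, i.e. of $\{(i,r-i):0\le i\le r\}$.
   Context: Metric graphs and functions. A metric graph is obtained from a finite connected graph by identifying each edge with a closed interval of positive length. $T_v(\Gamma)$ is the set of outgoing tangent directions at $v$ and the valence is $|T_v(\Gamma)|$. $\mathrm{PL}(\Gamma)$ is the set of continuous piecewise linear functions with integer slopes, and $\mathrm{sl}_\eta(f)$ is the outgoing slope along $\eta$. We set $\mathrm{ord}_v(f)=-\sum_\eta\mathrm{sl}_\eta(f)$ and $\mathrm{div}(f)=\sum_v\mathrm{ord}_v(f)v$. For a divisor $D$ (finite formal integer sum of points, support $\mathrm{supp}(D)$), $R(D)=\{f:D+\mathrm{div}(f)\ge0\}$. Tropical linear series. A tropical linear series of rank $r$ is $(D,\Sigma)$ with $\Sigma\subseteq R(D)$ a finitely generated tropical submodule (closed under $\min\{f_i+a_i\}$) such that: (1) every effective $E$ of degree $r$ admits $f\in\Sigma$ with $\mathrm{div}(f)+D\ge E$; (2) every $r+2$ functions of $\Sigma$ are tropically dependent (there are $a_i$ with $\min_i(f_i+a_i)$ attained at least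 twice everywhere). It is strongly recursive (recursively in $r$) if: (3) every $r$ functions lie in a strongly recursive subseries of rank $r-1$; (4) for $S_1,S_2\subseteq\Sigma$ of sizes $s_1,s_2\le r$ with $s_1+s_2\ge r+2$, there are strongly recursive subseries $\Sigma_1\supseteq S_1$ and $\Sigma_2\supseteq S_2$ of ranks $s_1-1$ and $s_2-1$ whose intersection contains a strongly recursive tropical linear series of rank $s_1+s_2-r-2$. Local arrays. For a tropical linear series of rank $r$ the slope set $\{\mathrm{sl}_\eta(f):f\in\Sigma\}$ has exactly $r+1$ elements $s_\eta[0]<\dots<s_\eta[r]$. The local array at $v$ with tangent ordering $\eta_1,\dots,\eta_d$ is $\{\mathbf x\in[r]^d:\exists f\in\Sigma,\ \mathrm{sl}_{\eta_i}(f)=s_{\eta_i}[x_i]\ \forall i\}$, where $[r]=\{0,\dots,r\}$. Redundant closure. For $P\subseteq[r]^d$, a point $\mathbf x$ is redundant if it is the coordinatewise minimum of some $\mathcal H\subseteq P$ with $|\mathcal H|\ge2$ whose every member shares a coordinate with $\mathbf x$. The redundant closure is $P$ together with its redundant points. *)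

(* Defs.v *)
From HB Require Import structures.
From mathcomp Require Import all_boot all_order all_algebra.
From mathcomp Require Import boolp classical_sets reals.

Set Implicit Arguments.
Unset Strict Implicit.
Unset Printing Implicit Defensive.

Import Order.TTheory GRing.Theory Num.Theory.
Local Open Scope ring_scope.

(* Metric graphs: a finite connected (multi)graph, loops allowed,       *)
(* each edge identified with the interval [0, len e], parameter 0 at    *)
(* [msrc e] and [len e] at [mtgt e].                                    *)

Definition madj (V E : finType) (s t : E -> V) : rel V :=
  [rel u w | [exists e, ((s e == u) && (t e == w)) || ((s e == w) && (t e == u))]].

Record metric_graph (R : realType) := MetricGraph {
  mV : finType;
  mE : finType;
  msrc : mE -> mV;
  mtgt : mE -> mV;
  mlen : mE -> R;
  mlen_pos : forall e, 0 < mlen e;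
  mconn : forall u w : mV, connect (madj msrc mtgt) u w
}.

Section MG.
Variables (R : realType) (G : metric_graph R).

Definition gpoint : Type :=
  (mV G + {e : mE G & {t : R | 0 < t < mlen e}})%type.

Definition epoint (e : mE G) (t : R) : gpoint :=
  if t == 0 then inl (msrc e)
  else if t == mlen e then inl (mtgt e)
  else match insub t : option {t : R | 0 < t < mlen e} with
       | Some u => inr (existT _ e u)
       | None => inl (msrc e)
       end.

Definition fedge (f : gpoint -> R) (e : mE G) (t : R) : R := f (epoint e t).

(* Tangent directions: (e, true) = along e in increasing parameter,
   (e, false) = along e in decreasing parameter. *)
Definition dir : Type := (mE G * bool)%type.

Definition tangents (x : gpoint) : seq dir :=
  match x with
  | inl v => [seq (e, true) | e <- enum (mE G) & msrc e == v]
             ++ [seq (e, false) | e <- enum (mE G) & mtgt e == v]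
  | inr p => [:: (tag p, true); (tag p, false)]
  end.

Definition valence (x : gpoint) : nat := size (tangents x).

Definition gbase (x : gpoint) (eta : dir) : R :=
  match x with
  | inl _ => if eta.2 then 0 else mlen eta.1
  | inr p => val (tagged p)
  end.

(* Outgoing slope sl_eta(f) at x along eta (meaningful for eta in T_x and f PL). *)
Definition slope (f : gpoint -> R) (x : gpoint) (eta : dir) : int :=
  xget 0%R (fun s : int => exists2 eps : R, 0 < eps &
    forall h : R, 0 < h < eps ->
      fedge f eta.1 (gbase x eta + (if eta.2 then h else - h))
      = fedge f eta.1 (gbase x eta) + s%:~R * h).

Definition PL (f : gpoint -> R) : Prop :=
  forall e : mE G, exists (n : nat) (a : nat -> R) (m : nat -> int),
    [/\ a 0%N = 0, a n = mlen e,
        (forall i, (i < n)%N -> a i < a i.+1) &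
        (forall i t, (i < n)%N -> a i <= t <= a i.+1 ->
           fedge f e t = fedge f e (a i) + (m i)%:~R * (t - a i))].

Definition ord (f : gpoint -> R) (x : gpoint) : int :=
  - \sum_(eta <- tangents x) slope f x eta.

Definition divisor_fin_supp (D : gpoint -> int) : Prop :=
  exists s : seq gpoint, forall x, D x != 0 -> x \in s.

Definition in_RD (D : gpoint -> int) (f : gpoint -> R) : Prop :=
  PL f /\ forall x, 0 <= D x + ord f x.

Definition fsig := (gpoint -> R) -> Prop.

Definition tmin (n : nat) (g : 'I_n.+1 -> gpoint -> R) (a : 'I_n.+1 -> R)
  (x : gpoint) : R :=
  \big[Num.min/(g ord0 x + a ord0)]_(i < n.+1) (g i x + a i).

Definition fg_tropical_submodule (S : fsig) : Prop :=
  (forall n (g : 'I_n.+1 -> gpoint -> R) a,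
      (forall i, S (g i)) -> S (tmin g a)) /\
  exists m (gens : 'I_m -> gpoint -> R),
    (forall i, S (gens i)) /\
    forall f, S f -> exists n (idx : 'I_n.+1 -> 'I_m) (a : 'I_n.+1 -> R),
      forall x, f x = tmin (fun i => gens (idx i)) a x.

Definition trop_dependent (n : nat) (fs : 'I_n -> gpoint -> R) : Prop :=
  exists a : 'I_n -> R, forall x, exists i j, [/\ i != j,
    fs i x + a i = fs j x + a j &
    forall k, fs i x + a i <= fs k x + a k].

Definition TLS (r : nat) (D : gpoint -> int) (S : fsig) : Prop :=
  [/\ fg_tropical_submodule S,
      (forall f, S f -> in_RD D f),
      (forall Es : seq gpoint, size Es = r ->
         exists2 f, S f & forall x, (count_mem x Es)%:Z <= D x + ord f x) &
      (forall fs : 'I_(r + 2) -> gpoint -> R, (forall i, S (fs i)) ->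
         trop_dependent fs)].

Definition subS (S1 S2 : fsig) : Prop := forall f, S1 f -> S2 f.

(* strongly recursive tropical linear series (least predicate, which is
   the recursive definition on the rank since all recursive calls are
   at strictly smaller ranks) *)
Inductive SR (D : gpoint -> int) : nat -> fsig -> Prop :=
| SR_intro (r : nat) (S : fsig) :
    TLS r D S ->
    (0 < r)%N ->
    (forall fs : 'I_r -> gpoint -> R, injective fs -> (forall i, S (fs i)) ->
       exists S' : fsig, [/\ subS S' S, (forall i, S' (fs i)) & SR D r.-1 S']) ->
    (forall (s1 s2 : nat) (F1 : 'I_s1 -> gpoint -> R) (F2 : 'I_s2 -> gpoint -> R),
       (s1 <= r)%N -> (s2 <= r)%N -> (r + 2 <= s1 + s2)%N ->
       injective F1 -> injective F2 ->
       (forall i, S (F1 i)) -> (forall i, S (F2 i)) ->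
       exists (S1 S2 : fsig),
         [/\ subS S1 S, subS S2 S, (forall i, S1 (F1 i)), (forall i, S2 (F2 i)) &
             SR D s1.-1 S1] /\ SR D s2.-1 S2 /\ (
             exists S3 : fsig, (forall f, S3 f -> S1 f /\ S2 f) /\
                               SR D (s1 + s2 - r - 2) S3)) ->
    SR D r S
| SR_intro0 (S : fsig) : TLS 0 D S -> SR D 0 S.

Definition slope_seq (S : fsig) (x : gpoint) (eta : dir) : seq int :=
  xget [::] (fun l : seq int => sorted <%R l /\
    forall k, k \in l <-> exists2 f, S f & slope f x eta = k).

Definition sidx (S : fsig) (x : gpoint) (eta : dir) (i : nat) : int :=
  nth 0 (slope_seq S x eta) i.

Definition local_array (r d : nat) (S : fsig) (x : gpoint) (etas : 'I_d -> dir)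
  (p : {ffun 'I_d -> 'I_r.+1}) : Prop :=
  exists2 f, S f & forall i, slope f x (etas i) = sidx S x (etas i) (p i).

End MG.

Section Arrays.
Variables (r d : nat).
Notation pt := {ffun 'I_d -> 'I_r.+1}.

Definition redundant (P : {set pt}) (x : pt) : bool :=
  [exists H : {set pt},
     [&& H \subset P, (2 <= #|H|)%N,
         [forall i, (x i : nat) == \big[minn/r]_(h in H) (h i : nat)] &
         [forall h in H, exists i, h i == x i]]].

Definition redundant_closure (P : {set pt}) : {set pt} :=
  P :|: [set x | redundant P x].
End Arrays.

Definition std_perm_array2 (r : nat) : {set {ffun 'I_2 -> 'I_r.+1}} :=
  [set x : {ffun 'I_2 -> 'I_r.+1} | (x ord0 + x (lift ord0 ord0) == r)%N].

(* Main.v *)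
Require Import Defs.
From HB Require Import structures.
From mathcomp Require Import all_boot all_order all_algebra.
From mathcomp Require Import boolp classical_sets reals.
From mathcomp Require Import lra ring zify.
Import Order.TTheory GRing.Theory Num.Theory.
Set Implicit Arguments.
Unset Strict Implicit.
Unset Printing Implicit Defensive.

Lemma bigmin_le (T : finType) (P : {pred T}) (F : T -> nat) r h : h \in P ->
  (\big[minn/r]_(i in P) F i <= F h)%N.
Proof.
move=> hP; have : h \in index_enum T by rewrite mem_index_enum.
elim: (index_enum T) => [//|a s IH]; rewrite in_cons big_cons => /orP[/eqP<-|hs].
  by rewrite hP geq_minl.
by case: (a \in P); rewrite ?geq_min IH ?orbT.
Qed.

Lemma bigmin_ge (T : finType) (P : {pred T}) (F : T -> nat) r y : (y <= r)%N ->
  (forall i, i \in P -> y <= F i)%N -> (y <= \big[minn/r]_(i in P) F i)%N.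
Proof.
move=> yr H; apply: (big_ind (fun z => y <= z)%N) => //.
  by move=> a b ya yb; rewrite leq_min ya yb.
Qed.

Notation o1 := (@lift 2 ord0 ord0).

Lemma I2 (i : 'I_2) : i = ord0 \/ i = o1.
Proof.
case: i => [[|[|k]] p].
- by left; apply: val_inj.
- by right; apply: val_inj.
- by [].
Qed.

Lemma closure_iff r (x : {ffun 'I_2 -> 'I_r.+1}) :
  (x \in redundant_closure (std_perm_array2 r)) = (x ord0 + x o1 <= r)%N.
Proof.
rewrite /redundant_closure /std_perm_array2 !inE.
apply/idP/idP.
  case/orP=> [/eqP -> //|].
  move=> /existsP[H /and4P[HP H2 /forallP Hm _]].
  have : (0 < #|H|)%N by apply: leq_trans H2.
  move=> /card_gt0P[h hH].
  have /eqP E0 := Hm ord0; have /eqP E1 := Hm o1.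
  have := fintype.subsetP HP h hH; rewrite inE => /eqP hr.
  rewrite E0 E1; apply: (@leq_trans (h ord0 + h o1)); last by rewrite hr.
  by apply: leq_add; exact: bigmin_le.
move=> xr; case: (ltngtP (x ord0 + x o1) r) => [lt|gt|eq]; last first.
- by [].
- by move: xr; rewrite leqNgt gt.
apply/orP; right.
have r0 : (r - x ord0 < r.+1)%N by rewrite ltnS leq_subr.
have r1 : (r - x o1 < r.+1)%N by rewrite ltnS leq_subr.
pose hA : {ffun 'I_2 -> 'I_r.+1} := [ffun i => if i == ord0 then x ord0 else Ordinal r0].
pose hB : {ffun 'I_2 -> 'I_r.+1} := [ffun i => if i == ord0 then Ordinal r1 else x o1].
have hAB : hA != hB.
  apply/eqP => /(congr1 (fun f : {ffun 'I_2 -> 'I_r.+1} => (f ord0 : nat))).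
  rewrite !ffunE /=; lia.
have x0r : (x ord0 <= r)%N by rewrite -ltnS.
have x1r : (x o1 <= r)%N by rewrite -ltnS.
apply/existsP; exists [set hA; hB]; apply/and4P; split.
- apply/fintype.subsetP => h; rewrite !inE => /orP[|] /eqP ->; rewrite !ffunE /=; apply/eqP; lia.
- by rewrite cards2 hAB.
- apply/forallP => i; apply/eqP; apply/anti_leq/andP; split.
    apply: bigmin_ge; first by case: (I2 i) => ->.
    move=> h; rewrite !inE => /orP[|] /eqP ->; rewrite !ffunE;
      by case: (I2 i) => -> /=; lia.
  case: (I2 i) => ->.
    by apply: (leq_trans (bigmin_le _ _ (h := hA) _)); rewrite ?inE ?eqxx // /hA ffunE.
  by apply: (leq_trans (bigmin_le _ _ (h := hB) _)); rewrite ?inE ?eqxx ?orbT // /hB ffunE.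
- apply/forallP => h; apply/implyP; rewrite !inE => /orP[|] /eqP ->.
    by apply/existsP; exists ord0; rewrite ffunE.
  by apply/existsP; exists o1; rewrite ffunE.
Qed.

Local Open Scope ring_scope.

Section Lines.
Variable R : realType.

Lemma two_lines (d0 dm : R) : exists2 e : R, 0 < e &
  (forall h, 0 <= h < e -> d0 + dm * h <= 0) \/
  (forall h, 0 <= h < e -> 0 <= d0 + dm * h).
Proof.
have [d0lt|d0ge] := ltP d0 0.
  have [dmle|dmgt] := leP dm 0.
    exists 1; first lra. left=> h /andP[h0 _]; nra.
  exists (- d0 / dm).
    by rewrite divr_gt0 // oppr_gt0.
  left=> h /andP[h0 hl].
  have : dm * h < dm * (- d0 / dm) by rewrite ltr_pM2l.
  rewrite [dm * (_ / _)]mulrC divfK ?gt_eqF //; lra.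
have [d0gt|d0e] := ltP 0 d0.
  have [dmge|dmlt] := leP 0 dm.
    exists 1; first lra. right=> h /andP[h0 _]; nra.
  exists (d0 / - dm).
    by rewrite divr_gt0 // oppr_gt0.
  right=> h /andP[h0 hl].
  have : (- dm) * h < (- dm) * (d0 / - dm) by rewrite ltr_pM2l // oppr_gt0.
  rewrite [- dm * (_ / _)]mulrC divfK; last by rewrite oppr_eq0 lt_eqF.
  lra.
have -> : d0 = 0 by apply/eqP; rewrite eq_le d0e d0ge.
exists 1; first lra.
have [dmge|dmlt] := leP 0 dm.
  right=> h /andP[h0 _]; nra.
left=> h /andP[h0 _]; nra.
Qed.

Variables (I : eqType) (c : I -> R) (m : I -> int) (i0 : I).

Definition line j (u : R) : R := c j + (m j)%:~R * u.
Definition Lm (s : seq I) (u : R) : R :=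
  \big[Num.min/line i0 u]_(i <- s) line i u.
Definition fam (s : seq I) j := (j == i0) || (j \in s).
Definition dsg (b : bool) (h : R) : R := if b then h else - h.

Lemma Lm_le s j u : fam s j -> Lm s u <= line j u.
Proof.
rewrite /fam /Lm; elim: s => [|a s IH] /=.
  by rewrite big_nil in_nil orbF => /eqP->.
rewrite big_cons in_cons => /orP[ji|/orP[/eqP->|js]].
- by rewrite ge_min; apply/orP; right; apply: IH; rewrite ji.
- by rewrite ge_min lexx.
- by rewrite ge_min; apply/orP; right; apply: IH; rewrite js orbT.
Qed.

Lemma Lm_germ s b u : exists j, fam s j /\ exists2 e : R, 0 < e &
  forall h, 0 <= h < e -> Lm s (u + dsg b h) = line j (u + dsg b h).
Proof.
rewrite /fam /Lm; elim: s => [|a s [j [fj [e e0 He]]]].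
  exists i0; split; first by rewrite eqxx.
  by exists 1 => // h _; rewrite big_nil.
have [e2 e20 H2] := two_lines (line a u - line j u)
   (((m a)%:~R - (m j)%:~R) * (if b then 1 else -1)).
have e3 : 0 < Num.min e e2 by rewrite lt_min e0 e20.
have key : forall h, 0 <= h < Num.min e e2 ->
   0 <= h < e /\ line a (u + dsg b h) - line j (u + dsg b h) =
   line a u - line j u + ((m a)%:~R - (m j)%:~R) * (if b then 1 else -1) * h.
  move=> h /andP[h0]; rewrite lt_min => /andP[he he2]; split; first by rewrite h0.
  by rewrite /line /dsg; case: (b); ring.
case: H2 => H2.
  exists a; split; first by rewrite in_cons eqxx orbT.
  exists (Num.min e e2) => // h hh; rewrite big_cons.
  have [h1 h2] := key h hh.
  rewrite He // min_l //.
  have : 0 <= h < e2 by move: hh; rewrite lt_min => /andP[-> /andP[_ ->]].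
  move=> /H2; rewrite -h2; lra.
exists j; split; first by move: fj; rewrite in_cons => /orP[->|->]; rewrite ?orbT.
exists (Num.min e e2) => // h hh; rewrite big_cons.
have [h1 h2] := key h hh.
rewrite He // min_r //.
have : 0 <= h < e2 by move: hh; rewrite lt_min => /andP[-> /andP[_ ->]].
move=> /H2; rewrite -h2; lra.
Qed.

Definition active s b u j := exists2 e : R, 0 < e &
  forall h, 0 <= h < e -> Lm s (u + dsg b h) = line j (u + dsg b h).

Lemma active0 s b u j : active s b u j -> Lm s u = line j u.
Proof. by case=> e e0 /(_ 0); rewrite /dsg; case: b; rewrite ?oppr0 addr0 lexx e0 => ->. Qed.

Lemma Lm_concave s u w j k : u < w -> fam s j -> fam s k ->
  active s true u j -> active s false w k -> m k <= m j.
Proof.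
move=> uw fj fk /active0 Hj /active0 Hk.
have A1 := Lm_le u fk. have A2 := Lm_le w fj.
move: A1 A2; rewrite Hj Hk /line => A1 A2.
rewrite -(ler_int R).
have : ((m k)%:~R - (m j)%:~R) * (w - u) <= 0 :> R by nra.
move=> H; have wu : 0 < w - u by lra.
rewrite -subr_le0; rewrite pmulr_lle0 // in H.
Qed.

Lemma index_lt (sl : seq int) x y : sorted <%R sl -> x \in sl -> y \in sl ->
  (x < y) -> (index x sl < index y sl)%N.
Proof.
move=> ss xs ys xy.
rewrite -(lt_sorted_ltn_nth 0 ss) ?inE ?index_mem // !nth_index //.
Qed.

Lemma index_le (sl : seq int) x y : sorted <%R sl -> x \in sl -> y \in sl ->
  (x <= y) -> (index x sl <= index y sl)%N.
Proof.
move=> ss xs ys xy.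
rewrite -(lt_sorted_leq_nth 0 ss) ?inE ?index_mem // !nth_index //.
Qed.

Lemma chainR s (sl : seq int) (e : R) : sorted <%R sl ->
  (forall j, fam s j -> m j \in sl) -> 0 < e ->
  forall n y, (forall k, (k < n)%N -> forall j j', fam s j -> fam s j' ->
      active s true (y + k.+1%:R * e) j -> active s false (y + k.+1%:R * e) j' ->
      m j < m j') ->
  forall j, fam s j -> active s true y j -> (n <= index (m j) sl)%N.
Proof.
move=> ss Hm e0; elim=> [//|n IH] y Hst j fj aj.
have [j' [fj' [e1 e10 H1]]] := Lm_germ s true (y + e).
have [k' [fk' [e2 e20 H2]]] := Lm_germ s false (y + e).
have IH' := IH (y + e) _ j' fj' (ex_intro2 _ _ e1 e10 H1).
have : (n <= index (m j') sl)%N.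
  apply: IH' => k kn i i' fi fi' ai ai'.
  have E : y + e + k.+1%:R * e = y + k.+2%:R * e.
    by rewrite [k.+2%:R]mulrS; ring.
  apply: (Hst k.+1) => //; by rewrite -E.
move=> hn.
have st : m j' < m k'.
  apply: (Hst 0%N) => //; rewrite mul1r.
  - by exists e1.
  - by exists e2.
have cc : m k' <= m j.
  have ye : y < y + e by lra.
  exact: (Lm_concave ye fj fk' aj (ex_intro2 _ _ e2 e20 H2)).
have := index_lt ss (Hm _ fj') (Hm _ fk') st.
have := index_le ss (Hm _ fk') (Hm _ fj) cc.
move=> a b; apply: leq_ltn_trans hn _; exact: leq_trans b a.
Qed.

End Lines.

Lemma search_le (R : realType) (a : nat -> R) n t : a 0%N <= t -> t < a n ->
  exists i, (i < n)%N /\ a i <= t < a i.+1.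
Proof.
elim: n => [|n IH] h0 hn; first lra.
have [tn|tn] := ltP t (a n).
  by have [i [i1 i2]] := IH h0 tn; exists i; split=> //; apply: ltnW.
by exists n; rewrite tn hn.
Qed.

Lemma search_lt (R : realType) (a : nat -> R) n t : a 0%N < t -> t <= a n ->
  exists i, (i < n)%N /\ a i < t <= a i.+1.
Proof.
elim: n => [|n IH] h0 hn; first lra.
have [tn|tn] := leP t (a n).
  by have [i [i1 i2]] := IH h0 tn; exists i; split=> //; apply: ltnW.
by exists n; rewrite tn hn.
Qed.

Lemma unif_eps (R : realType) (T : eqType) (P : T -> R -> Prop) (s : seq T) :
  (forall x e e', P x e -> 0 < e' <= e -> P x e') ->
  (forall x, x \in s -> exists2 e, 0 < e & P x e) ->
  exists2 e, 0 < e & forall x, x \in s -> P x e.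
Proof.
move=> Pd; elim: s => [|a s IH] H; first by exists 1.
have [e e0 He] : exists2 e : R, 0 < e & forall x, x \in s -> P x e.
  by apply: IH => x xs; apply: H; rewrite in_cons xs orbT.
have [ea ea0 Ha] := H a (mem_head _ _).
exists (Num.min e ea); first by rewrite lt_min e0 ea0.
move=> x; rewrite in_cons => /orP[/eqP->|xs].
  by apply: Pd Ha _; rewrite lt_min e0 ea0 /= ge_min lexx orbT.
by apply: Pd (He x xs) _; rewrite lt_min e0 ea0 /= ge_min lexx.
Qed.

Section Graph.
Variables (R : realType) (G : metric_graph R).
Notation gp := (gpoint G).

Definition germP (f : gp -> R) (x : gp) (eta : dir G) (s : int) :=
  exists2 e : R, 0 < e & forall h, 0 < h < e ->
    fedge f eta.1 (gbase x eta + dsg eta.2 h) = fedge f eta.1 (gbase x eta) + s%:~R * h.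

Lemma min_pos (e e' : R) : 0 < e -> 0 < e' ->
  [/\ 0 < Num.min e e', Num.min e e' <= e & Num.min e e' <= e'].
Proof. by move=> e0 e0'; rewrite lt_min e0 e0' !ge_min !lexx ?orbT. Qed.

Lemma germP_uniq f x eta s s' : germP f x eta s -> germP f x eta s' -> s = s'.
Proof.
move=> [e e0 He] [e' e0' He'].
have [m0 m1 m2] := min_pos e0 e0'.
set mm := Num.min e e' in m0 m1 m2.
have h0 : 0 < mm / 2 by rewrite divr_gt0.
have A1 : 0 < mm / 2 < e by apply/andP; split=> //; lra.
have A2 : 0 < mm / 2 < e' by apply/andP; split=> //; lra.
have := He _ A1; rewrite He' // => /addrI /mulIf.
by move=> /(_ (lt0r_neq0 h0)) /intr_inj.
Qed.

Lemma slope_eq f x eta s : germP f x eta s -> slope f x eta = s.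
Proof.
move=> H; have := xgetPex 0 (ex_intro _ s H).
by rewrite -/(slope f x eta) => /germP_uniq; apply.
Qed.

Lemma slope_spec f x eta : (exists s, germP f x eta s) -> germP f x eta (slope f x eta).
Proof. by move=> [s H]; rewrite (slope_eq H). Qed.


Lemma tangents_inl w eta : eta \in tangents (inl w : gp) ->
  (if eta.2 then msrc eta.1 else mtgt eta.1) = w.
Proof.
rewrite /tangents mem_cat => /orP[|] /mapP[e]; rewrite mem_filter => /andP[/eqP E _] ->//.
Qed.

Lemma tangents_inr p eta : eta \in tangents (inr p : gp) -> eta.1 = tag p.
Proof. by rewrite /tangents !inE => /orP[|] /eqP->. Qed.

Definition dE (v : gp) (eta : dir G) :=
  if eta.2 then mlen eta.1 - gbase v eta else gbase v eta.

Lemma gbase_bounds (v : gp) (eta : dir G) : eta \in tangents v ->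
  0 <= gbase v eta <= mlen eta.1 /\ 0 < dE v eta.
Proof.
rewrite /dE; case: v => [w|p] /=.
  move=> _; have := mlen_pos eta.1; case: eta.2 => ?; split=> //;
    rewrite ?subr0 ?lexx //; apply/andP; split; lra.
move=> /tangents_inr E; case: (tagged p) => t /= /andP[t0 t1].
rewrite E; case: eta.2; split; lra.
Qed.

Lemma ray_in (v : gp) (eta : dir G) (w : R) : eta \in tangents v -> 0 < w < dE v eta ->
  0 < gbase v eta + dsg eta.2 w < mlen eta.1.
Proof.
move=> /gbase_bounds [/andP [g0 g1] _]; rewrite /dE /dsg.
case: eta.2 => /andP[w0 w1]; apply/andP; split; lra.
Qed.

Lemma epoint_inr (e : mE G) (t : R) : 0 < t < mlen e ->
  exists p, epoint e t = inr p /\ tag p = e /\ val (tagged p) = t.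
Proof.
move=> /andP[t0 t1]; rewrite /epoint gt_eqF // lt_eqF //.
case: insubP => [u _ vu|]; first by exists (existT _ e u).
by rewrite t0 t1.
Qed.

Lemma epoint_base (v : gp) (eta : dir G) : eta \in tangents v -> epoint eta.1 (gbase v eta) = v.
Proof.
case: v => [w|p].
  move=> /tangents_inl; rewrite /epoint /=; have := mlen_pos eta.1.
  case: eta.2 => h <-; first by rewrite eqxx.
  by rewrite gt_eqF // eqxx.
move=> /tangents_inr E; rewrite /=.
have H : 0 < val (tagged p) < mlen eta.1 by rewrite E; case: (tagged p).
have [q [-> [E1 E2]]] := epoint_inr H.
congr inr; case: p q E E1 E2 {H} => e u [e' u'] /= -> E1 E2; subst e'.
by congr existT; apply: val_inj.
Qed.


Lemma PL_germ (f : gp -> R) (v : gp) (eta : dir G) : PL f -> eta \in tangents v ->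
  germP f v eta (slope f v eta).
Proof.
move=> /(_ eta.1) [n [a [m [a0 an inc pc]]]] /gbase_bounds [/andP[g0 g1] dE0].
apply: slope_spec; move: dE0; rewrite /germP /dE /dsg.
case: eta.2 => dE0.
  have [i [iN /andP[ai1 ai2]]] : exists i, (i < n)%N /\ a i <= gbase v eta < a i.+1.
    by apply: search_le; rewrite ?a0 ?an //; lra.
  exists (m i); exists (a i.+1 - gbase v eta); first lra.
  move=> h /andP[h0 h1].
  rewrite (pc i) //; last by apply/andP; split; lra.
  rewrite [fedge f eta.1 (gbase v eta)](pc i) //; last by apply/andP; split; lra.
  ring.
have [i [iN /andP[ai1 ai2]]] : exists i, (i < n)%N /\ a i < gbase v eta <= a i.+1.
  by apply: search_lt; rewrite ?a0 ?an //; lra.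
exists (- m i); exists (gbase v eta - a i); first lra.
move=> h /andP[h0 h1].
rewrite (pc i) //; last by apply/andP; split; lra.
rewrite [fedge f eta.1 (gbase v eta)](pc i) //; last by apply/andP; split; lra.
rewrite rmorphN /=; ring.
Qed.


Definition ray (v : gp) (eta : dir G) (w : R) : gp :=
  epoint eta.1 (gbase v eta + dsg eta.2 w).

Definition rgerm (phi : R -> R) (w : R) (rho : int) :=
  exists2 e : R, 0 < e & forall h, 0 < h < e -> phi (w + h) = phi w + rho%:~R * h.
Definition lgerm (phi : R -> R) (w : R) (lam : int) :=
  exists2 e : R, 0 < e & forall h, 0 < h < e -> phi (w - h) = phi w - lam%:~R * h.

Lemma ord_ray (f : gp -> R) (v : gp) (eta : dir G) (w : R) rho lam :
  eta \in tangents v -> 0 < w < dE v eta ->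
  rgerm (fun u => f (ray v eta u)) w rho -> lgerm (fun u => f (ray v eta u)) w lam ->
  ord f (ray v eta w) = lam - rho.
Proof.
move=> et wr [e1 e10 H1] [e2 e20 H2].
have [p [Hp [E1 E2]]] := epoint_inr (ray_in et wr).
have Hp' : ray v eta w = inr p := Hp.
rewrite /ord Hp' /= big_cons big_cons big_nil E1.
set t := gbase v eta + dsg eta.2 w in E2.
have Hr : forall h, f (ray v eta (w + h)) = fedge f eta.1 (t + dsg eta.2 h).
  by move=> h; rewrite /ray /fedge /t /dsg; case: (eta.2); congr (f (epoint _ _)); ring.
have Hl : forall h, f (ray v eta (w - h)) = fedge f eta.1 (t - dsg eta.2 h).
  by move=> h; rewrite /ray /fedge /t /dsg; case: (eta.2); congr (f (epoint _ _)); ring.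
have Hw : f (ray v eta w) = fedge f eta.1 t by [].
have gR : forall b, b = eta.2 -> slope f (inr p) (eta.1, b) = rho.
  move=> b Eb; apply: slope_eq; exists e1 => // h hh.
  rewrite /= E2 -Hw -H1 // Hr -Eb //.
have gL : forall b, b = ~~ eta.2 -> slope f (inr p) (eta.1, b) = - lam.
  move=> b Eb; apply: slope_eq; exists e2 => // h hh.
  rewrite /= E2 -Hw.
  have -> : t + dsg b h = t - dsg eta.2 h by rewrite Eb /dsg; case: (eta.2) => //=; rewrite opprK.
  by rewrite -Hl H2 // rmorphN /=; ring.
case E : eta.2.
  by rewrite gR // gL ?E //; ring.
by rewrite gL ?E // gR //; ring.
Qed.


Definition proj (x : gp) : R := match x with inl _ => 0 | inr p => val (tagged p) end.

Lemma ray_inj (v : gp) (eta : dir G) w w' : eta \in tangents v ->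
  0 < w < dE v eta -> 0 < w' < dE v eta -> ray v eta w = ray v eta w' -> w = w'.
Proof.
move=> et ww ww' /(congr1 proj); rewrite /ray.
have [p [Hp [_ E]]] := epoint_inr (ray_in et ww).
have [p' [Hp' [_ E']]] := epoint_inr (ray_in et ww').
rewrite Hp Hp' /= E E'.
by rewrite /dsg; case: (eta.2) => /= /addrI // /oppr_inj.
Qed.

Lemma avoid (D : gp -> int) (v : gp) (eta : dir G) : divisor_fin_supp D ->
  eta \in tangents v -> exists2 d : R, 0 < d &
    d <= dE v eta /\ forall w, 0 < w < d -> D (ray v eta w) = 0.
Proof.
move=> [s Hs] et; have [_ dE0] := gbase_bounds et.
have [e e0 He] : exists2 e : R, 0 < e & forall y, y \in s ->
    (e <= dE v eta /\ forall w, 0 < w < e -> ray v eta w != y).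
  apply: (@unif_eps R _ (fun y e => e <= dE v eta /\ forall w, 0 < w < e -> ray v eta w != y)).
- move=> x e e' [H1 H2] /andP[e'0 e'e]; split; first lra.
  by move=> w /andP[w0 we]; apply: H2; rewrite w0 /=; lra.
- move=> y _.
  case: (pselect (exists w, 0 < w < dE v eta /\ ray v eta w = y)).
    move=> [w [ww <-]]; exists w; first by case/andP: ww.
    split; first by case/andP: ww => _ /ltW.
    move=> w' /andP[w'0 w'w]; apply/eqP => /ray_inj E.
    have : w' = w by apply: E => //; case/andP: ww => _ ?; rewrite w'0 /=; lra.
    lra.
  move=> NE; exists (dE v eta) => //; split=> // w ww; apply/eqP => E; apply: NE.
  by exists w.
have [m0 m1 m2] := min_pos e0 dE0.
exists (Num.min e (dE v eta)) => //; split => //.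
move=> w /andP[w0 ww]; apply/eqP; apply: contraT => /Hs ys.
have [_ H] := He _ ys.
have : 0 < w < e by rewrite w0 /=; lra.
by move/H; rewrite eqxx.
Qed.

End Graph.

Section Trop.
Variables (R : realType) (G : metric_graph R).
Notation gp := (gpoint G).
Variables (D : gp -> int) (S : (gp -> R) -> Prop).
Hypothesis Hfg : fg_tropical_submodule S.
Hypothesis HRD : forall f, S f -> in_RD D f.

Lemma dsg0 b : dsg b (0 : R) = 0.
Proof. by rewrite /dsg; case: b; rewrite ?oppr0. Qed.

Lemma REP (v : gp) (eta : dir G) : eta \in tangents v ->
  exists (GL : seq int) (d0 : R), [/\ 0 < d0, d0 <= dE v eta,
   (forall k, k \in GL -> exists2 g, S g & slope g v eta = k) &
   forall f, S f -> exists n (c : 'I_n.+1 -> R) (m : 'I_n.+1 -> int),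
     (forall i, m i \in GL) /\
     forall u, 0 <= u < d0 -> f (ray v eta u) = Lm c m ord0 (index_enum _) u].
Proof.
move=> et; case: Hfg => _ [mg [gens [Hg Hrep]]].
exists [seq slope (gens j) v eta | j <- enum 'I_mg].
have [e e0 He] : exists2 e : R, 0 < e & forall j, j \in enum 'I_mg ->
   forall h, 0 < h < e -> fedge (gens j) eta.1 (gbase v eta + dsg eta.2 h) =
      fedge (gens j) eta.1 (gbase v eta) + (slope (gens j) v eta)%:~R * h.
  apply: (@unif_eps R _ (fun j e => forall h, 0 < h < e -> fedge (gens j) eta.1 (gbase v eta + dsg eta.2 h) =
      fedge (gens j) eta.1 (gbase v eta) + (slope (gens j) v eta)%:~R * h)).
    move=> j e1 e2 H /andP[e20 e21] h /andP[h0 h1]; apply: H; rewrite h0 /=; lra.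
  move=> j _; have [e1 e10 H1] := PL_germ (proj1 (HRD (Hg j))) et.
  by exists e1.
have [_ dE0] := gbase_bounds et.
have [m0 m1 m2] := min_pos e0 dE0.
exists (Num.min e (dE v eta)); split => //.
  by move=> k /mapP[j _ ->]; exists (gens j).
have gl : forall j u, 0 <= u < Num.min e (dE v eta) ->
   gens j (ray v eta u) = fedge (gens j) eta.1 (gbase v eta) + (slope (gens j) v eta)%:~R * u.
  move=> j u /andP[u0 u1]; have [->|un] := eqVneq u 0.
    by rewrite /ray dsg0 !addr0 mulr0 addr0.
  rewrite /ray -/(fedge (gens j) _ _) He ?mem_enum //.
  by apply/andP; split; [rewrite lt_neqAle eq_sym un u0 | lra].
move=> f Sf; have [n [idx [a Hf]]] := Hrep f Sf.
exists n, (fun i => fedge (gens (idx i)) eta.1 (gbase v eta) + a i).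
exists (fun i => slope (gens (idx i)) v eta); split.
  by move=> i; apply/mapP; exists (idx i); rewrite ?mem_enum.
move=> u uu; rewrite Hf /tmin /Lm.
rewrite (eq_bigr (fun i => line (fun i => fedge (gens (idx i)) eta.1 (gbase v eta) + a i)
   (fun i => slope (gens (idx i)) v eta) i u)); last first.
  by move=> i _; rewrite gl // /line; ring.
by rewrite gl // /line; congr (\big[_/_]_(_ <- _) _); ring.
Qed.


Lemma slope_active (v : gp) (eta : dir G) (d0 : R) (f : gp -> R) n
  (c : 'I_n.+1 -> R) (m : 'I_n.+1 -> int) j : 0 < d0 ->
  (forall u, 0 <= u < d0 -> f (ray v eta u) = Lm c m ord0 (index_enum _) u) ->
  active c m ord0 (index_enum _) true 0 j -> slope f v eta = m j.
Proof.
move=> d00 Hr aj; have Hj0 := active0 aj; case: aj => e e0 He.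
have [m0 m1 m2] := min_pos e0 d00.
apply: slope_eq; exists (Num.min e d0) => // h /andP[h0 h1].
have -> : fedge f eta.1 (gbase v eta + dsg eta.2 h) = f (ray v eta h) by [].
have -> : fedge f eta.1 (gbase v eta) = f (ray v eta 0).
  by rewrite /ray dsg0 addr0.
have H1 : 0 <= h < d0 by apply/andP; split; lra.
have H2 : (0:R) <= 0 < d0 by apply/andP; split; lra.
rewrite (Hr h H1) (Hr 0 H2).
have := He h; rewrite /dsg add0r => ->; last by apply/andP; split; lra.
by rewrite Hj0 /line; ring.
Qed.

Lemma slope_seq_spec (v : gp) (eta : dir G) : eta \in tangents v ->
  sorted <%R (slope_seq S v eta) /\
  forall k, k \in slope_seq S v eta <-> exists2 f, S f & slope f v eta = k.
Proof.
move=> et; have [GL [d0 [d00 _ HGL HR]]] := REP et.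
have inGL : forall f, S f -> slope f v eta \in GL.
  move=> f Sf; have [n [c [m [Hm Hr]]]] := HR f Sf.
  have [j [_ aj]] := Lm_germ c m ord0 (index_enum _) true 0.
  by rewrite (slope_active d00 Hr aj).
apply: (xgetPex [::] (P := fun l : seq int => sorted <%R l /\
    forall k, k \in l <-> exists2 f, S f & slope f v eta = k)).
exists (sort <=%R (undup [seq k <- GL | `[< exists2 f, S f & slope f v eta = k >]])).
split; first by rewrite sort_lt_sorted undup_uniq.
move=> k; rewrite mem_sort mem_undup mem_filter; split.
  by move=> /andP[/asboolP].
move=> [f Sf fk]; apply/andP; split; first by apply/asboolP; exists f.
by rewrite -fk inGL.
Qed.


Lemma CORE (v : gp) (eta : dir G) : eta \in tangents v ->
  exists2 d : R, 0 < d & d <= dE v eta /\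
  forall f, S f -> forall n (eps : R), 0 < eps -> n%:R * eps < d ->
   (forall k, (k < n)%N -> 1 <= ord f (ray v eta (k.+1%:R * eps))) ->
   (n <= index (slope f v eta) (slope_seq S v eta))%N.
Proof.
move=> et; have [GL [d0 [d00 d0E HGL HR]]] := REP et.
have [ss sm] := slope_seq_spec et.
exists d0 => //; split=> // f Sf n eps eps0 neps Hord.
have [n' [c [m [Hm Hr]]]] := HR f Sf.
have [j [fj aj]] := Lm_germ c m ord0 (index_enum _) true 0.
rewrite (slope_active d00 Hr aj).
have famall : forall i, fam ord0 (index_enum 'I_n'.+1) i.
  by move=> i; rewrite /fam mem_index_enum orbT.
apply: (chainR ss _ eps0 _ (famall j) aj).
  move=> i _; apply/sm; have [g Sg gi] := HGL _ (Hm i); by exists g.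
move=> k kn j1 j2 _ _ a1 a2.
rewrite add0r in a1 a2.
set p := k.+1%:R * eps in a1 a2.
have p0 : 0 < p by rewrite /p mulr_gt0 // ltr0n.
have pd : p < d0.
  apply: le_lt_trans neps; rewrite /p ler_pM2r // ler_nat //.
have pdE : 0 < p < dE v eta by apply/andP; split=> //; lra.
have L1 := active0 a1; have L2 := active0 a2.
case: a1 => e1 e10 H1; case: a2 => e2 e20 H2.
have Hp : (0:R) <= p < d0 by apply/andP; split; lra.
have rg : rgerm (fun u => f (ray v eta u)) p (m j1).
  have dp : 0 < d0 - p by lra.
  have [q0 q1 q2] := @min_pos R e1 (d0 - p) e10 dp.
  exists (Num.min e1 (d0 - p)) => // h /andP[h0 h1].
  have Hh : 0 <= p + h < d0 by apply/andP; split; lra.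
  rewrite /= (Hr _ Hh) (Hr _ Hp) L1.
  have := H1 h; rewrite /dsg => ->; last by apply/andP; split; lra.
  by rewrite /line; ring.
have lg : lgerm (fun u => f (ray v eta u)) p (m j2).
  have [q0 q1 q2] := @min_pos R e2 p e20 p0.
  exists (Num.min e2 p) => // h /andP[h0 h1].
  have Hh : 0 <= p - h < d0 by apply/andP; split; lra.
  rewrite /= (Hr _ Hh) (Hr _ Hp) L2.
  have := H2 h; rewrite /dsg => ->; last by apply/andP; split; lra.
  by rewrite /line; ring.
have := Hord k kn; rewrite -/p (ord_ray et pdE rg lg).
move=> H; rewrite -subr_gt0; apply: lt_le_trans H; exact: ltr01.
Qed.


Lemma size_le (r : nat) (v : gp) (eta : dir G) : eta \in tangents v ->
  (forall fs : 'I_(r + 2) -> gp -> R, (forall i, S (fs i)) -> trop_dependent fs) ->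
  (size (slope_seq S v eta) <= r.+1)%N.
Proof.
move=> et Hdep; have [ss sm] := slope_seq_spec et.
set sl := slope_seq S v eta in ss sm *.
rewrite leqNgt; apply/negP => Hsz.
have ltk : forall k : 'I_(r + 2), (k < size sl)%N.
  by move=> k; apply: leq_trans (ltn_ord k) _; rewrite addn2.
have Hl : forall k : 'I_(r + 2), exists f, S f /\ slope f v eta = nth 0 sl k.
  move=> k; have : nth 0 sl k \in sl by apply: mem_nth.
  by move/sm => [f Sf fk]; exists f.
pose fs k := sval (cid (Hl k)).
have fsS : forall k, S (fs k) by move=> k; case: (svalP (cid (Hl k))).
have fsl : forall k, slope (fs k) v eta = nth 0 sl k by move=> k; case: (svalP (cid (Hl k))).
have lneq : forall i j : 'I_(r + 2), i != j -> nth 0 sl i != nth 0 sl j.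
  by move=> i j; rewrite nth_uniq ?lt_sorted_uniq.
have [e e0 He] : exists2 e : R, 0 < e & forall k, k \in enum 'I_(r + 2) ->
   forall h, 0 < h < e -> fedge (fs k) eta.1 (gbase v eta + dsg eta.2 h) =
      fedge (fs k) eta.1 (gbase v eta) + (nth 0 sl k)%:~R * h.
  apply: (@unif_eps R _ (fun k e => forall h, 0 < h < e -> fedge (fs k) eta.1 (gbase v eta + dsg eta.2 h) =
      fedge (fs k) eta.1 (gbase v eta) + (nth 0 sl k)%:~R * h)).
    move=> j e1 e2 H /andP[e20 e21] h /andP[h0 h1]; apply: H; rewrite h0 /=; lra.
  move=> k _; have [e1 e10 H1] := PL_germ (proj1 (HRD (fsS k))) et.
  by exists e1 => // h hh; rewrite -fsl H1.
have [a Ha] := Hdep fs fsS.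
pose N := ((r + 2) * (r + 2)).+1.
pose hh (t : 'I_N) : R := e / (t.+2)%:R.
have hh0 : forall t, 0 < hh t < e.
  move=> t; rewrite /hh; apply/andP; split; first by rewrite divr_gt0 // ltr0n.
  rewrite ltr_pdivrMr ?ltr0n //.
  have : 1 < (t.+2)%:R :> R by rewrite ltr1n.
  nra.
have Hp : forall t : 'I_N, exists p : 'I_(r + 2) * 'I_(r + 2), p.1 != p.2 /\
    fs p.1 (epoint eta.1 (gbase v eta + dsg eta.2 (hh t))) + a p.1 =
    fs p.2 (epoint eta.1 (gbase v eta + dsg eta.2 (hh t))) + a p.2.
  move=> t; have [i [j [ij E _]]] := Ha (epoint eta.1 (gbase v eta + dsg eta.2 (hh t))).
  by exists (i, j).
pose P t := sval (cid (Hp t)).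
have [t [t' [tt' Ptt']]] : exists t t', t != t' /\ P t = P t'.
  case: (pselect (exists t t', t != t' /\ P t = P t')) => // H; exfalso.
  have : injective P.
    move=> x y Pxy; case: (eqVneq x y) => // ne; exfalso; apply: H; by exists x, y.
  move/leq_card; rewrite card_ord card_prod !card_ord /N; lia.
have [ij1 E1] := svalP (cid (Hp t)).
have [ij2 E2] := svalP (cid (Hp t')).
rewrite -/(P t) in ij1 E1; rewrite -/(P t') -Ptt' in E2.
move: E1 E2; case: (P t) ij1 => i j /= ij.
rewrite /fedge in He.
rewrite !He ?mem_enum ?hh0 //.
set Ci := fs i _; set Cj := fs j _.
set li := (nth 0 sl i)%:~R; set lj := (nth 0 sl j)%:~R.
move=> E1 E2.
have : (li - lj) * (hh t - hh t') = 0 :> R.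
  have -> : (li - lj) * (hh t - hh t') =
    (Ci + li * hh t + a i - (Cj + lj * hh t + a j)) -
    (Ci + li * hh t' + a i - (Cj + lj * hh t' + a j)) by ring.
  by rewrite -addrA E1 -addrA E2 addrA subrr addrA subrr subrr.
move/eqP; rewrite mulf_eq0 => /orP[|].
  rewrite subr_eq0 /li /lj => /eqP /intr_inj /eqP; exact/negP/lneq.
rewrite subr_eq0 /hh => /eqP /(mulfI (lt0r_neq0 e0)) /invr_inj /eqP.
rewrite eqr_nat !eqSS => /eqP tt; move: tt'; rewrite -val_eqE /= tt eqxx.
done.
Qed.


Lemma small_pts (r n : nat) (M : R) : 0 < M -> (n <= r)%N ->
  0 < M / r.+1%:R /\ n%:R * (M / r.+1%:R) < M.
Proof.
move=> M0 nr; have q0 : 0 < r.+1%:R :> R by rewrite ltr0n.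
split; first by rewrite divr_gt0.
by rewrite mulrA ltr_pdivrMr // mulrC ltr_pM2l // ltr_nat ltnS.
Qed.


Lemma realize (r l : nat) (v : gp) (eta1 eta2 : dir G) :
  divisor_fin_supp D -> eta1 \in tangents v -> eta2 \in tangents v ->
  (forall Es : seq gp, size Es = r ->
     exists2 f, S f & forall x, (count_mem x Es)%:Z <= D x + ord f x) ->
  (l <= r)%N ->
  exists2 f, S f & ((r - l) <= index (slope f v eta1) (slope_seq S v eta1))%N /\
                   (l <= index (slope f v eta2) (slope_seq S v eta2))%N.
Proof.
move=> Dfs e1 e2 H1 lr.
have [d1 d10 [_ C1]] := CORE e1; have [d2 d20 [_ C2]] := CORE e2.
have [a1 a10 [_ A1]] := avoid Dfs e1; have [a2 a20 [_ A2]] := avoid Dfs e2.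
pose M := Num.min (Num.min d1 d2) (Num.min a1 a2).
have [Md1 Md2 Ma1 Ma2] : [/\ M <= d1, M <= d2, M <= a1 & M <= a2].
  by rewrite /M !ge_min !lexx !orbT.
have M0 : 0 < M by rewrite /M !lt_min d10 d20 a10 a20.
pose eps := M / r.+1%:R.
have eps0 : 0 < eps by case: (small_pts M0 (leqnn r)).
have pt : forall k, (k < r)%N -> 0 < k.+1%:R * eps < M.
  move=> k kr; apply/andP; split; first by rewrite mulr_gt0 // ltr0n.
  by case: (small_pts M0 kr).
pose Es := [seq ray v eta1 (k.+1%:R * eps) | k <- iota 0 (r - l)] ++
           [seq ray v eta2 (k.+1%:R * eps) | k <- iota 0 l].
have sz : size Es = r by rewrite size_cat !size_map !size_iota subnK.
have [f Sf Hf] := H1 Es sz.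
have one : forall x, x \in Es -> D x = 0 -> 1 <= ord f x.
  move=> x xE Dx; have := Hf x; rewrite Dx add0r; apply: le_trans.
  by rewrite lez_nat -has_count has_pred1.
exists f => //; split.
  have [_ Hs] := small_pts M0 (leq_subr l r).
  apply: (C1 f Sf (r - l)%N eps eps0); first exact: lt_le_trans Hs Md1.
  move=> k kn; have kr : (k < r)%N by apply: leq_trans kn (leq_subr _ _).
  apply: one.
    by rewrite mem_cat; apply/orP; left; apply/mapP; exists k => //; rewrite mem_iota.
  by apply: A1; have := pt k kr; move=> /andP[? ?]; apply/andP; split=> //; lra.
have [_ Hs] := small_pts M0 lr.
apply: (C2 f Sf l eps eps0); first exact: lt_le_trans Hs Md2.
move=> k kn; have kr : (k < r)%N by apply: leq_trans kn lr.
apply: one.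
  by rewrite mem_cat; apply/orP; right; apply/mapP; exists k => //; rewrite mem_iota.
by apply: A2; have := pt k kr; move=> /andP[? ?]; apply/andP; split=> //; lra.
Qed.

End Trop.

Section Main.
Variables (R : realType) (G : metric_graph R).
Notation gp := (gpoint G).

Definition g2 (fA fB : gp -> R) (v : gp) : gp -> R :=
  tmin (n := 1) (fun i : 'I_2 => if i == ord0 then fA else fB)
       (fun i => if i == ord0 then - fA v else - fB v).

Lemma g2E fA fB v x : g2 fA fB v x = Num.min (fA x - fA v) (fB x - fB v).
Proof.
rewrite /g2 /tmin big_ord_recl big_ord_recl big_ord0 /=.
by rewrite minC -minA minxx minC.
Qed.

Lemma g2_slope (fA fB : gp -> R) (v : gp) (eta : dir G) : PL fA -> PL fB ->
  eta \in tangents v ->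
  slope (g2 fA fB v) v eta = Num.min (slope fA v eta) (slope fB v eta).
Proof.
move=> PA PB et.
have [eA eA0 HA] := PL_germ PA et; have [eB eB0 HB] := PL_germ PB et.
have [m0 m1 m2] := min_pos eA0 eB0.
have bv := epoint_base et.
apply: slope_eq; exists (Num.min eA eB) => // h /andP[h0 h1].
rewrite /fedge in HA HB; rewrite /fedge !g2E.
rewrite HA; last by apply/andP; split; lra.
rewrite HB; last by apply/andP; split; lra.
rewrite /fedge bv !subrr.
have -> : Num.min 0 0 = 0 :> R by rewrite minxx.
set a := slope fA v eta; set b := slope fB v eta.
have -> : fA v + a%:~R * h - fA v = a%:~R * h by ring.
have -> : fB v + b%:~R * h - fB v = b%:~R * h by ring.
rewrite add0r.
case: (leP a b) => ab.
  rewrite !min_l //; by rewrite ler_pM2r // ler_int.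
have ba : b <= a by rewrite ltW.
by rewrite min_r // ler_pM2r // ler_int.
Qed.

End Main.

Lemma sum2 (R : realType) (G : metric_graph R) (v : gpoint G) (eta1 eta2 : dir G)
  (F : dir G -> int) :
  valence v = 2%N -> eta1 \in tangents v -> eta2 \in tangents v -> eta1 != eta2 ->
  \sum_(eta <- tangents v) F eta = F eta1 + F eta2.
Proof.
rewrite /valence; case: (tangents v) => [|a [|b [|c t]]] //= _.
rewrite !inE big_cons big_cons big_nil addr0.
move=> /orP[/eqP->|/eqP->] /orP[/eqP->|/eqP->]; rewrite ?eqxx //.
by rewrite addrC.
Qed.

Lemma tn1 (T : Type) (a b : T) : tnth [tuple a; b] ord0 = a. Proof. by []. Qed.
Lemma tn2 (T : Type) (a b : T) : tnth [tuple a; b] (lift ord0 ord0) = b. Proof. by []. Qed.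

Theorem mainTheorem5 (R : realType) (G : metric_graph R) (r : nat)
  (D : gpoint G -> int) (S : (gpoint G -> R) -> Prop)
  (v : gpoint G) (eta1 eta2 : dir G) :
  divisor_fin_supp D ->
  SR D r S ->
  valence v = 2%N ->
  eta1 \in tangents v -> eta2 \in tangents v -> eta1 != eta2 ->
  D v = 0 ->
  (forall i : 'I_r.+1, sidx S v eta1 i + sidx S v eta2 (r - i) = 0) ->
  forall x : {ffun 'I_2 -> 'I_r.+1},
    local_array S v (tnth [tuple eta1; eta2]) x <->
    x \in redundant_closure (std_perm_array2 r).
Proof.
move=> Dfs HSR val e1 e2 e12 Dv Hsym x.
have [Hfg HRD H1 H4] : TLS r D S by case: HSR.
have [ss1 sm1] := slope_seq_spec Hfg HRD e1.
have [ss2 sm2] := slope_seq_spec Hfg HRD e2.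
have sz : forall eta, eta \in tangents v -> size (slope_seq S v eta) = r.+1.
  move=> eta et; apply/anti_leq/andP; split.
    exact: (size_le Hfg HRD et H4).
  have [f Sf [H _]] := realize Hfg HRD (l := 0) Dfs et et H1 (leq0n r).
  rewrite subn0 in H; have [_ sm] := slope_seq_spec Hfg HRD et.
  have : slope f v eta \in slope_seq S v eta by apply/sm; exists f.
  rewrite -index_mem => Hi; exact: leq_ltn_trans H Hi.
have ordv : forall f, S f -> slope f v eta1 + slope f v eta2 <= 0.
  move=> f Sf; have [_ Hd] := HRD f Sf; have := Hd v.
  rewrite Dv add0r /ord (@sum2 _ _ _ _ _ (fun eta => slope f v eta) val e1 e2 e12) oppr_ge0 //.
rewrite /sidx in Hsym.
set s1 := slope_seq S v eta1 in ss1 sm1 Hsym.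
set s2 := slope_seq S v eta2 in ss2 sm2 Hsym.
have sz1 : size s1 = r.+1 := sz _ e1.
have sz2 : size s2 = r.+1 := sz _ e2.
have key : forall l, (l <= r)%N -> exists2 f, S f &
    slope f v eta1 = nth 0 s1 (r - l) /\ slope f v eta2 = nth 0 s2 l.
  move=> l lr; have [f Sf [Hi Hj]] := realize Hfg HRD Dfs e1 e2 H1 lr.
  rewrite -/s1 -/s2 in Hi Hj.
  have m1 : slope f v eta1 \in s1 by apply/sm1; exists f.
  have m2 : slope f v eta2 \in s2 by apply/sm2; exists f.
  set i := index (slope f v eta1) s1 in Hi.
  set j := index (slope f v eta2) s2 in Hj.
  have i_lt : (i < r.+1)%N by rewrite -sz1 index_mem.
  have j_lt : (j < r.+1)%N by rewrite -sz2 index_mem.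
  have F1 : slope f v eta1 = nth 0 s1 i by rewrite nth_index.
  have F2 : slope f v eta2 = nth 0 s2 j by rewrite nth_index.
  have hs := Hsym (Ordinal i_lt); rewrite /= in hs.
  have o := ordv f Sf; rewrite F1 F2 in o.
  have : nth 0 s2 j <= nth 0 s2 (r - i) by rewrite -(lerD2l (nth 0 s1 i)) hs.
  rewrite (lt_sorted_leq_nth 0 ss2) ?inE ?sz2 ?ltnS ?leq_subr // => jle.
  have ii : i = (r - l)%N by lia.
  have jj : j = l by lia.
  by exists f => //; rewrite F1 F2 ii jj.
rewrite closure_iff; split.
  case=> f Sf Hf.
  have E1 := Hf ord0; have E2 := Hf (lift ord0 ord0).
  rewrite tn1 -/s1 in E1; rewrite tn2 -/s2 in E2.
  have o := ordv f Sf; rewrite E1 E2 in o.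
  have hs := Hsym (x ord0).
  have : nth 0 s2 (x (lift ord0 ord0)) <= nth 0 s2 (r - x ord0) by rewrite -(lerD2l (nth 0 s1 (x ord0))) hs.
  rewrite (lt_sorted_leq_nth 0 ss2) ?inE ?sz2 ?ltn_ord ?ltnS ?leq_subr // => le.
  have := ltn_ord (x ord0); lia.
move=> xr.
have [fA SA [A1 A2]] := key (r - x ord0)%N (leq_subr _ _).
have x1r : (x (lift ord0 ord0) <= r)%N by lia.
have [fB SB [B1 B2]] := key (x (lift ord0 ord0)) x1r.
have x0r : (x ord0 <= r)%N by have := ltn_ord (x ord0); lia.
rewrite subKn // in A1.
have Sg : S (g2 fA fB v).
  by apply: (proj1 Hfg) => i; case: (i == ord0).
exists (g2 fA fB v) => // i; case: (I2 i) => ->; rewrite ?tn1 ?tn2 /sidx -/s1 -/s2.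
  rewrite (g2_slope (proj1 (HRD _ SA)) (proj1 (HRD _ SB)) e1) A1 B1 min_l //.
  rewrite (lt_sorted_leq_nth 0 ss1) ?inE ?sz1 ?ltnS ?leq_subr //; lia.
rewrite (g2_slope (proj1 (HRD _ SA)) (proj1 (HRD _ SB)) e2) A2 B2 min_r //.
rewrite (lt_sorted_leq_nth 0 ss2) ?inE ?sz2 ?ltnS ?leq_subr //; lia.
Qed.
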